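(* For every countable ordinal $\beta\ge1$ and every finite $m\ge1$, the linear order $\omega^\beta\cdot m$ (ordinal exponentiation and multiplication) satisfies $\mathsf{rk}(\omega^\beta\cdot m)=\omega\cdot\beta+\lfloor\log_2 m\rfloor$.
   Context: An ordinal is regarded as the linear order $(\alpha,\in)$. Let $\mathcal F$ be the class of finite linear orders (language $\{<\}$); countable linear orders are the structures considered; substructures are suborders and $\mathsf{age}(X)$ is the set of finite suborders of $X$. For $A\le B$, $B$ is a prime extension of $A$ if $|B\setminus A|=1$; a realization of $B$ in $X$ (where $A\le X$) is $C\le X$ with $A\le C$ and an order-isomorphism $B\to C$ fixing $A$ pointwise. For $F\in\mathsf{age}(X)$ define by recursion: $\mathsf{rk}_X(F)\ge0$ always; $\mathsf{rk}_X(F)\ge\gamma+1$ iff every prime extension $B\in\mathcal F$ of $F$ has a realization $C$ in $X$ with $\mathsf{rk}_X(C)\ge\gamma$; for limit $\gamma$, $\mathsf{rk}_X(F)\ge\gamma$ iff $\mathsf{rk}_X(F)\ge\delta$ for all $\delta<\gamma$. $\mathsf{rk}_X(F)=\sup\{\gamma:\mathsf{rk}_X(F)\ge\gamma\}$ (or $\infty$ if this holds for all ordinals), and $\mathsf{rk}(X)=\mathsf{rk}_X(\emptyset)$. *)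

(* Defs.v *)
(* Countable linear orders are given as a carrier type with a
   strict order relation (in Prop); ordinals are given as well-orders. *)
From Stdlib Require Import Arith List.
Import ListNotations.

Definition strict_total_order {T : Type} (lt : T -> T -> Prop) : Prop :=
  (forall x, ~ lt x x) /\
  (forall x y z, lt x y -> lt y z -> lt x z) /\
  (forall x y, x = y \/ lt x y \/ lt y x).

Definition countable_type (T : Type) : Prop :=
  exists f : T -> nat, forall x y, f x = f y -> x = y.

Definition pts {X : Type} (F : list X) := { x : X | In x F }.

(* A prime extension B of the finite suborder F: carrier [option (pts F)],
   where [None] is the single new point, [Some a] is the point a of F;
   B is a (finite) strict linear order whose restriction to F is the order of X. *)
Definition prime_ext {X : Type} (ltX : X -> X -> Prop) (F : list X)
  (R : option (pts F) -> option (pts F) -> Prop) : Prop :=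
  strict_total_order R /\
  (forall a b : pts F, R (Some a) (Some b) <-> ltX (proj1_sig a) (proj1_sig b)).

(* x realizes B in X: C := x :: F is a suborder of X containing F, and the map
   None |-> x, Some a |-> a is an order-isomorphism B -> C fixing F pointwise. *)
Definition realizes {X : Type} (ltX : X -> X -> Prop) (F : list X)
  (R : option (pts F) -> option (pts F) -> Prop) (x : X) : Prop :=
  ~ In x F /\
  (forall a : pts F,
     (R None (Some a) <-> ltX x (proj1_sig a)) /\
     (R (Some a) None <-> ltX (proj1_sig a) x)).

Definition succ_of {W : Type} (ltW : W -> W -> Prop) (v w : W) : Prop :=
  ltW v w /\ forall u, ~ (ltW v u /\ ltW u w).

Definition is_limit {W : Type} (ltW : W -> W -> Prop) (w : W) : Prop :=
  (exists v, ltW v w) /\ ~ (exists v, succ_of ltW v w).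

(* rkge ltX ltW F w  :<->  rk_X(F) >= (order type of the initial segment of W below w).
   0: always; successor w = v+1: every prime extension has a realization C with
   rk_X(C) >= v; limit w: rk_X(F) >= v for all v < w. *)
Inductive rkge {X : Type} (ltX : X -> X -> Prop) {W : Type} (ltW : W -> W -> Prop)
  : list X -> W -> Prop :=
| rkge_intro (F : list X) (w : W) :
    (forall v, succ_of ltW v w ->
       forall R, prime_ext ltX F R ->
         exists x, realizes ltX F R x /\ rkge ltX ltW (x :: F) v) ->
    (is_limit ltW w -> forall v, ltW v w -> rkge ltX ltW F v) ->
    rkge ltX ltW F w.

Definition rank_eq {X : Type} (ltX : X -> X -> Prop) {W : Type} (ltW : W -> W -> Prop)
  (w : W) : Prop :=
  rkge ltX ltW [] w /\ forall v, ltW w v -> ~ rkge ltX ltW [] v.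

Definition fin_supp {T : Type} (f : T -> nat) : Prop :=
  exists l : list T, forall t, f t <> 0 -> In t l.

(* omega^beta = finitely supported functions beta -> omega, compared at the
   largest point where they differ. *)
Definition antilex_lt {T : Type} (ltT : T -> T -> Prop) (f g : T -> nat) : Prop :=
  exists t, f t < g t /\ forall s, ltT t s -> f s = g s.

(* omega^beta * m = m consecutive copies of omega^beta (copy index major). *)
Definition OPM (T : Type) (m : nat) : Type :=
  { p : nat * (T -> nat) | fst p < m /\ fin_supp (snd p) }.

Definition opm_lt {T : Type} (ltT : T -> T -> Prop) (m : nat) (x y : OPM T m) : Prop :=
  let (i, f) := proj1_sig x in
  let (j, g) := proj1_sig y in
  i < j \/ (i = j /\ antilex_lt ltT f g).

(* inl (t, n): position omega*t + n (beta copies of omega, copy index major);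
   inr k: position omega*beta + k. *)
Definition OW (T : Type) : Type := ((T * nat) + nat)%type.

Definition ow_lt {T : Type} (ltT : T -> T -> Prop) (a b : OW T) : Prop :=
  match a, b with
  | inl (t, n), inl (t', n') => ltT t t' \/ (t = t' /\ n < n')
  | inl _, inr _ => True
  | inr _, inl _ => False
  | inr k, inr k' => k < k'
  end.

(* Main.v *)
Require Import Defs.
From Stdlib Require Import Arith List ZArith Lia Classical ClassicalEpsilon FunctionalExtensionality ProofIrrelevance.
Import ListNotations.

Definition dec (P : Prop) : {P} + {~ P} := excluded_middle_informative P.

Lemma list_max {A : Type} (lt : A -> A -> Prop)
  (tri : forall x y, x = y \/ lt x y \/ lt y x)
  (tr : forall x y z, lt x y -> lt y z -> lt x z) (P : A -> Prop) (l : list A) :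
  (forall x, In x l -> ~ P x) \/
  (exists x, In x l /\ P x /\ forall y, In y l -> P y -> y = x \/ lt y x).
Proof.
  induction l as [|a l IH].
  - left; intros x [].
  - destruct (classic (P a)) as [Pa|nPa]; destruct IH as [IH|[x [Hx [Px Hm]]]].
    + right; exists a; split; [left; auto|split; auto].
      intros y [<-|Hy] Py; [auto|exfalso; exact (IH y Hy Py)].
    + destruct (tri a x) as [<-|[Hax|Hxa]].
      * right; exists a; split; [left; auto|split; auto].
        intros y [<-|Hy] Py; auto.
      * right; exists x; split; [right; auto|split; auto].
        intros y [<-|Hy] Py; auto.
      * right; exists a; split; [left; auto|split; auto].
        intros y [<-|Hy] Py; auto.
        destruct (Hm y Hy Py) as [->|H]; right; eauto.
    + left; intros y [<-|Hy]; auto.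
    + right; exists x; split; [right; auto|split; auto].
      intros y [<-|Hy] Py; [contradiction|auto].
Qed.

Section Main.
Variable T : Type.
Variable ltT : T -> T -> Prop.
Hypothesis Hord : strict_total_order ltT.
Hypothesis Hwf : well_founded ltT.
Variable m : nat.
Hypothesis Hm : 1 <= m.
Variable t0 : T.
Hypothesis Ht0 : forall t, t <> t0 -> ltT t0 t.

Lemma ltT_irr : forall x, ~ ltT x x. Proof. apply Hord. Qed.
Lemma ltT_trans : forall x y z, ltT x y -> ltT y z -> ltT x z. Proof. apply Hord. Qed.
Lemma ltT_tri : forall x y, x = y \/ ltT x y \/ ltT y x. Proof. apply Hord. Qed.

Definition olt (a b : option T) : Prop :=
  match a, b with
  | Some a, Some b => ltT a b
  | Some _, None => True
  | None, _ => False
  end.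

Lemma olt_irr : forall a, ~ olt a a.
Proof. intros [a|]; simpl; auto using ltT_irr. Qed.
Lemma olt_trans : forall a b c, olt a b -> olt b c -> olt a c.
Proof. intros [a|] [b|] [c|]; simpl; eauto using ltT_trans; tauto. Qed.
Lemma olt_tri : forall a b, a = b \/ olt a b \/ olt b a.
Proof.
  intros [a|] [b|]; simpl; auto.
  destruct (ltT_tri a b) as [->|[H|H]]; auto.
Qed.
Lemma olt_t0 : forall p, ~ olt p (Some t0).
Proof.
  intros [s|]; simpl; auto. intros H.
  destruct (classic (s = t0)) as [->|Hn]; [exact (ltT_irr _ H)|].
  exact (ltT_irr _ (ltT_trans _ _ _ H (Ht0 _ Hn))).
Qed.

Definition Ext := option T -> Z.
Definition DiffAt (e1 e2 : Ext) (d : option T) : Prop :=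
  e1 d <> e2 d /\ forall d', olt d d' -> e1 d' = e2 d'.
Definition elt (e1 e2 : Ext) : Prop := exists d, DiffAt e1 e2 d /\ (e1 d < e2 d)%Z.
Definition fsupp (e : Ext) : Prop := exists l, forall d, e d <> 0%Z -> In d l.

Lemma DiffAt_unique : forall e1 e2 d d', DiffAt e1 e2 d -> DiffAt e1 e2 d' -> d = d'.
Proof.
  intros e1 e2 d d' [H1 H2] [H1' H2'].
  destruct (olt_tri d d') as [?|[H|H]]; auto.
  - exfalso; apply H1'; auto.
  - exfalso; apply H1; auto.
Qed.

Lemma elt_irr : forall e, ~ elt e e.
Proof. intros e [d [[H _] _]]; auto. Qed.

Lemma elt_trans : forall a b c, elt a b -> elt b c -> elt a c.
Proof.
  intros a b c [d1 [[N1 E1] L1]] [d2 [[N2 E2] L2]].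
  destruct (olt_tri d1 d2) as [<-|[H|H]].
  - exists d1; split; [split|]; [lia| |lia].
    intros d' Hd; rewrite E1, E2; auto.
  - exists d2; split; [split|].
    + rewrite E1; auto.
    + intros d' Hd; rewrite E1, E2; eauto using olt_trans.
    + rewrite E1; auto.
  - exists d1; split; [split|].
    + rewrite <- E2; auto.
    + intros d' Hd; rewrite E1, E2; eauto using olt_trans.
    + rewrite <- E2; auto.
Qed.

Lemma elt_asym : forall a b, elt a b -> elt b a -> False.
Proof. intros a b H1 H2; exact (elt_irr _ (elt_trans _ _ _ H1 H2)). Qed.

Lemma elt_tri : forall a b, fsupp a -> fsupp b -> a = b \/ elt a b \/ elt b a.
Proof.
  intros a b [la Ha] [lb Hb].
  destruct (list_max olt olt_tri olt_trans (fun d => a d <> b d) (la ++ lb))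
    as [H|[d [Hd [Pd Hmax]]]].
  - left; apply functional_extensionality; intros d.
    destruct (Z.eq_dec (a d) (b d)) as [?|Hn]; auto.
    exfalso; apply (H d); auto.
    apply in_or_app.
    destruct (Z.eq_dec (a d) 0); [right; apply Hb; lia|left; apply Ha; lia].
  - assert (HD : DiffAt a b d).
    { split; auto. intros d' Hdd'.
      destruct (Z.eq_dec (a d') (b d')) as [?|Hn]; auto.
      exfalso.
      assert (Hin : In d' (la ++ lb)).
      { apply in_or_app.
        destruct (Z.eq_dec (a d') 0); [right; apply Hb; lia|left; apply Ha; lia]. }
      destruct (Hmax d' Hin Hn) as [->|H]; [exact (olt_irr _ Hdd')|].
      exact (olt_irr _ (olt_trans _ _ _ H Hdd')). }
    right. destruct (Z.lt_trichotomy (a d) (b d)) as [H|[H|H]].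
    + left; exists d; auto.
    + contradiction.
    + right; exists d; split; auto. destruct HD as [H1 H2]; split; auto.
      intros d' Hd'; symmetry; auto.
Qed.


Notation X := (OPM T m).
Notation ltX := (opm_lt ltT m).

Definition emb (x : X) : Ext := fun d =>
  match d with
  | None => Z.of_nat (fst (proj1_sig x))
  | Some t => Z.of_nat (snd (proj1_sig x) t)
  end.

Definition botE : Ext := fun d =>
  match d with
  | Some t => if dec (t = t0) then (-1)%Z else 0%Z
  | None => 0%Z
  end.
Definition topE : Ext := fun d =>
  match d with None => Z.of_nat m | Some _ => 0%Z end.

Lemma emb_lt : forall x y, ltX x y <-> elt (emb x) (emb y).
Proof.
  intros [[i f] [Hi Hf]] [[j g] [Hj Hg]]; unfold opm_lt, emb; simpl.
  split.
  - intros [H|[-> [t [H1 H2]]]].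
    + exists None; split; [split|]; [lia| |lia]. intros d' [].
    + exists (Some t); split; [split|]; [lia| |lia].
      intros [s|] Hs; simpl in Hs; [rewrite H2; auto|auto].
  - intros [[t|] [[N E] L]]; cbn in *.
    + right. assert (i = j) by (specialize (E None I); cbn in E; lia). split; auto.
      exists t; split; [lia|]. intros s Hs; specialize (E (Some s) Hs); cbn in E; lia.
    + left; lia.
Qed.

Lemma emb_inj : forall x y, emb x = emb y -> x = y.
Proof.
  intros [[i f] Hx] [[j g] Hy] E.
  assert (i = j) by (pose proof (f_equal (fun e => e None) E) as HE; simpl in HE; lia).
  assert (f = g).
  { apply functional_extensionality; intros t.
    pose proof (f_equal (fun e => e (Some t)) E) as HE; simpl in HE; lia. }
  subst. f_equal. apply proof_irrelevance.
Qed.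

Lemma emb_nonneg : forall x d, (0 <= emb x d)%Z.
Proof. intros x [t|]; simpl; lia. Qed.
Lemma emb_None : forall x, (emb x None < Z.of_nat m)%Z.
Proof. intros [[i f] [Hi Hf]]; simpl in *; lia. Qed.

Lemma emb_fsupp : forall x, fsupp (emb x).
Proof.
  intros [[i f] [Hi [l Hl]]].
  exists (None :: map Some l). intros [t|] H; simpl in *; [right|left; auto].
  apply in_map. apply Hl. lia.
Qed.
Lemma bot_fsupp : fsupp botE.
Proof.
  exists [Some t0]. intros [t|] H; simpl in *; [|lia].
  destruct (dec (t = t0)); [left; congruence|lia].
Qed.
Lemma top_fsupp : fsupp topE.
Proof. exists [None]. intros [t|] H; simpl in *; [lia|auto]. Qed.

Lemma existsX : forall e : Ext, (forall d, (0 <= e d)%Z) -> (e None < Z.of_nat m)%Z ->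
  fsupp e -> exists x : X, emb x = e.
Proof.
  intros e H0 H1 [l Hl].
  assert (Hfs : fin_supp (fun t => Z.to_nat (e (Some t)))).
  { exists (flat_map (fun d => match d with Some t => [t] | None => [] end) l).
    intros t Ht. apply in_flat_map. exists (Some t). split; [apply Hl; lia|left; auto]. }
  assert (Hlt : Z.to_nat (e None) < m) by lia.
  exists (exist _ (Z.to_nat (e None), fun t => Z.to_nat (e (Some t))) (conj Hlt Hfs)).
  apply functional_extensionality; intros [t|]; simpl; specialize (H0 (Some t)) || specialize (H0 None); lia.
Qed.

Lemma ltX_tri : forall x y : X, x = y \/ ltX x y \/ ltX y x.
Proof.
  intros x y. destruct (elt_tri (emb x) (emb y) (emb_fsupp x) (emb_fsupp y)) as [H|[H|H]].
  - left; apply emb_inj; auto.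
  - right; left; apply emb_lt; auto.
  - right; right; apply emb_lt; auto.
Qed.
Lemma ltX_trans : forall x y z : X, ltX x y -> ltX y z -> ltX x z.
Proof. intros x y z H1 H2; apply emb_lt; apply emb_lt in H1, H2; eapply elt_trans; eauto. Qed.
Lemma ltX_irr : forall x : X, ~ ltX x x.
Proof. intros x H; apply emb_lt in H; exact (elt_irr _ H). Qed.

Lemma bot_lt_emb : forall x, elt botE (emb x).
Proof.
  intros x. destruct (elt_tri botE (emb x) bot_fsupp (emb_fsupp x)) as [H|[H|H]]; auto.
  - exfalso. pose proof (f_equal (fun e => e (Some t0)) H) as H'; simpl in H'.
    destruct (dec (t0 = t0)) as [_|n]; [|apply n; auto].
    pose proof (emb_nonneg x (Some t0)); lia.
  - exfalso. destruct H as [d [_ L]]. pose proof (emb_nonneg x d).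
    destruct d as [t|]; simpl in L; [destruct (dec (t = t0))|]; lia.
Qed.
Lemma emb_lt_top : forall x, elt (emb x) topE.
Proof.
  intros x. exists None. pose proof (emb_None x). split; [split|]; simpl in *; [lia| |lia].
  intros d [].
Qed.
Lemma bot_lt_top : elt botE topE.
Proof. exists None. split; [split|]; simpl; [lia| |lia]. intros d []. Qed.

Definition inF (F : list X) (e : Ext) : Prop :=
  e = botE \/ e = topE \/ exists y, In y F /\ e = emb y.

Lemma inF_fsupp : forall F e, inF F e -> fsupp e.
Proof.
  intros F e [->|[->|[y [_ ->]]]]; auto using bot_fsupp, top_fsupp, emb_fsupp.
Qed.
Lemma inF_top : forall F e, inF F e -> ~ elt topE e.
Proof.
  intros F e [->|[->|[y [_ ->]]]] H.
  - exact (elt_asym _ _ H bot_lt_top).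
  - exact (elt_irr _ H).
  - exact (elt_asym _ _ H (emb_lt_top y)).
Qed.
Lemma inF_bot : forall F e, inF F e -> ~ elt e botE.
Proof.
  intros F e [->|[->|[y [_ ->]]]] H.
  - exact (elt_irr _ H).
  - exact (elt_asym _ _ H bot_lt_top).
  - exact (elt_asym _ _ H (bot_lt_emb y)).
Qed.

Definition Consec (F : list X) (lo hi : Ext) : Prop :=
  inF F lo /\ inF F hi /\ elt lo hi /\
  forall y, In y F -> ~ (elt lo (emb y) /\ elt (emb y) hi).

Notation owlt := (ow_lt ltT).

Lemma owlt_irr : forall a, ~ owlt a a.
Proof.
  intros [[t n]|k]; simpl; [|lia]. intros [H|[_ H]]; [exact (ltT_irr _ H)|lia].
Qed.
Lemma owlt_trans : forall a b c, owlt a b -> owlt b c -> owlt a c.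
Proof.
  intros [[t n]|k] [[t' n']|k'] [[t'' n'']|k'']; simpl; try tauto; try lia.
  intros [H|[<- H]] [H'|[<- H']]; eauto using ltT_trans.
  right; split; auto; lia.
Qed.
Lemma owlt_tri : forall a b, a = b \/ owlt a b \/ owlt b a.
Proof.
  intros [[t n]|k] [[t' n']|k']; simpl; auto.
  - destruct (ltT_tri t t') as [<-|[H|H]]; auto.
    destruct (Nat.lt_trichotomy n n') as [H|[<-|H]]; auto.
  - destruct (Nat.lt_trichotomy k k') as [H|[<-|H]]; auto.
Qed.

Lemma acc_inl : forall t n, Acc owlt (inl (t, n)).
Proof.
  intros t. induction t as [t IHt] using (well_founded_induction Hwf).
  intros n. induction n as [n IHn] using (well_founded_induction lt_wf).
  constructor. intros [[t' n']|k] H; simpl in H; [|contradiction].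
  destruct H as [H|[-> H]]; [apply IHt; auto|apply IHn; auto].
Qed.
Lemma owlt_wf : well_founded owlt.
Proof.
  intros [[t n]|k]; [apply acc_inl|].
  induction k as [k IHk] using (well_founded_induction lt_wf).
  constructor. intros [[t' n']|k'] H; [apply acc_inl|apply IHk; exact H].
Qed.

Definition next (a : OW T) : OW T :=
  match a with inl (s, n) => inl (s, S n) | inr k => inr (S k) end.
Lemma succ_next : forall a, succ_of owlt a (next a).
Proof.
  intros [[s n]|k]; split; simpl; try lia; auto.
  - intros [[s' n']|k']; simpl; [|tauto].
    intros [[H|[E1 H]] [H'|[E2 H']]]; subst; try lia.
    + exact (ltT_irr _ (ltT_trans _ _ _ H H')).
    + exact (ltT_irr _ H).
    + exact (ltT_irr _ H').
  - intros [[s' n']|k']; simpl; [tauto|lia].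
Qed.

Definition rv (d : option T) (c : Z) : OW T :=
  match d with
  | Some s => inl (s, Nat.log2 (Z.to_nat c))
  | None => inr (Nat.log2 (Z.to_nat c))
  end.

Definition RV (e1 e2 : Ext) (r : OW T) : Prop :=
  exists d, DiffAt e1 e2 d /\ (e1 d < e2 d)%Z /\ r = rv d (e2 d - e1 d).

Lemma RV_unique : forall e1 e2 a b, RV e1 e2 a -> RV e1 e2 b -> a = b.
Proof.
  intros e1 e2 a b [d [D1 [_ ->]]] [d' [D2 [_ ->]]].
  rewrite (DiffAt_unique _ _ _ _ D1 D2); auto.
Qed.
Lemma RV_elt : forall e1 e2 r, RV e1 e2 r -> elt e1 e2.
Proof. intros e1 e2 r [d [D [L _]]]; exists d; auto. Qed.
Lemma elt_RV : forall e1 e2, elt e1 e2 -> exists r, RV e1 e2 r.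
Proof. intros e1 e2 [d [D L]]; eexists; exists d; eauto. Qed.

Lemma rv_lt_d : forall d1 d a b, olt d1 d -> owlt (rv d1 a) (rv d b).
Proof. intros [s1|] [s|] a b H; simpl in *; auto; contradiction. Qed.
Lemma rv_lt_c : forall d a b, Nat.log2 (Z.to_nat a) < Nat.log2 (Z.to_nat b) ->
  owlt (rv d a) (rv d b).
Proof. intros [s|] a b H; simpl; auto. Qed.
Lemma rv_le_c : forall d a b, Nat.log2 (Z.to_nat a) <= Nat.log2 (Z.to_nat b) ->
  ~ owlt (rv d b) (rv d a).
Proof.
  intros [s|] a b H; simpl; [|lia]. intros [H'|[_ H']]; [exact (ltT_irr _ H')|lia].
Qed.

Definition LB (F : list X) (w : OW T) : Prop :=
  forall lo hi r, Consec F lo hi -> RV lo hi r -> ~ owlt r w.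


Lemma log2_split : forall a b, 0 < a -> 0 < b ->
  Nat.log2 a < Nat.log2 (a + b) \/ Nat.log2 b < Nat.log2 (a + b).
Proof.
  intros a b Ha Hb. destruct (le_ge_dec a b) as [H|H].
  - left. pose proof (Nat.log2_double a Ha).
    pose proof (Nat.log2_le_mono (2 * a) (a + b) ltac:(lia)). lia.
  - right. pose proof (Nat.log2_double b Hb).
    pose proof (Nat.log2_le_mono (2 * b) (a + b) ltac:(lia)). lia.
Qed.

Lemma pow_log : forall c k, S k <= Nat.log2 c -> 2 * 2^k <= c.
Proof.
  intros c k H. destruct c as [|c]; [assert (Nat.log2 0 = 0) by reflexivity; lia|].
  pose proof (Nat.log2_spec (S c) ltac:(lia)) as [H1 _].
  pose proof (Nat.pow_le_mono_r 2 _ _ ltac:(lia) H) as H2.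
  rewrite Nat.pow_succ_r' in H2. lia.
Qed.

Lemma Ulem : forall lo x hi r r1 r2, RV lo hi r -> RV lo x r1 -> RV x hi r2 ->
  owlt r1 r \/ owlt r2 r.
Proof.
  intros lo x hi r r1 r2 [d [[N E] [L ->]]] [d1 [[N1 E1] [L1 ->]]] [d2 [[N2 E2] [L2 ->]]].
  assert (Hd1 : ~ olt d d1).
  { intro H. assert (lo d1 = hi d1) by auto.
    destruct (olt_tri d2 d1) as [<-|[H'|H']].
    - lia.
    - apply N1. rewrite (E2 d1 H'); auto.
    - apply N2. rewrite <- E1 by auto. apply E. eapply olt_trans; eauto. }
  assert (Hd2 : ~ olt d d2).
  { intro H. assert (lo d2 = hi d2) by auto.
    destruct (olt_tri d1 d2) as [<-|[H'|H']].
    - lia.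
    - apply N2. rewrite <- E1 by auto. auto.
    - apply N1. rewrite (E2 d1 H'). apply E. eapply olt_trans; eauto. }
  destruct (olt_tri d1 d) as [<-|[H1|H1]]; [|left; apply rv_lt_d; auto|contradiction].
  destruct (olt_tri d2 d1) as [<-|[H2|H2]]; [|right; apply rv_lt_d; auto|contradiction].
  set (a := Z.to_nat (x d2 - lo d2)). set (b := Z.to_nat (hi d2 - x d2)).
  assert (Hab : Z.to_nat (hi d2 - lo d2) = a + b) by (unfold a, b; lia).
  destruct (log2_split a b ltac:(unfold a; lia) ltac:(unfold b; lia)) as [H|H];
    [left|right]; apply rv_lt_c; rewrite Hab; auto.
Qed.

Lemma Lsplit : forall lo hi r u, (lo = botE \/ exists y, lo = emb y) ->
  (hi = topE \/ exists y, hi = emb y) -> RV lo hi r -> owlt u r ->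
  exists x, elt lo (emb x) /\ elt (emb x) hi /\
    (forall r1, RV lo (emb x) r1 -> ~ owlt r1 u) /\
    (forall r2, RV (emb x) hi r2 -> ~ owlt r2 u).
Proof.
  intros lo hi r u Hlo Hhi [d [[N E] [L ->]]] Hu.
  assert (Glo1 : forall d', d' <> Some t0 -> (0 <= lo d')%Z).
  { destruct Hlo as [->|[y ->]]; intros d' H;
      [destruct d' as [t|]; simpl; [destruct (dec (t = t0)); [subst; congruence|lia]|lia]
      |apply emb_nonneg]. }
  assert (Glo2 : forall d', (-1 <= lo d')%Z).
  { destruct Hlo as [->|[y ->]]; intros d';
      [destruct d' as [t|]; simpl; [destruct (dec (t = t0)); lia|lia]
      |pose proof (emb_nonneg y d'); lia]. }
  assert (Glo3 : (lo None < Z.of_nat m)%Z)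
    by (destruct Hlo as [->|[y ->]]; [simpl; lia|apply emb_None]).
  assert (Glo4 : fsupp lo) by (destruct Hlo as [->|[y ->]]; auto using bot_fsupp, emb_fsupp).
  assert (Ghi : (hi None <= Z.of_nat m)%Z)
    by (destruct Hhi as [->|[y ->]]; [simpl; lia|pose proof (emb_None y); lia]).
  assert (Hpk : exists p k, (olt p d \/ (p = d /\ S k <= Nat.log2 (Z.to_nat (hi d - lo d))))
                 /\ u = rv p (Z.of_nat (2^k))).
  { destruct u as [[s k]|k]; destruct d as [sd|]; simpl in Hu.
    - destruct Hu as [H|[-> H]].
      + exists (Some s), k; split; [left; exact H|].
        simpl; rewrite Nat2Z.id, Nat.log2_pow2 by lia; auto.
      + exists (Some sd), k; split; [right; split; [auto|lia]|].
        simpl; rewrite Nat2Z.id, Nat.log2_pow2 by lia; auto.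
    - exists (Some s), k; split; [left; simpl; auto|].
      simpl; rewrite Nat2Z.id, Nat.log2_pow2 by lia; auto.
    - contradiction.
    - exists None, k; split; [right; split; [auto|lia]|].
      simpl; rewrite Nat2Z.id, Nat.log2_pow2 by lia; auto. }
  destruct Hpk as [p [k [Hpd ->]]].
  set (x := fun d' => if dec (olt p d') then lo d'
                      else if dec (d' = p) then (lo d' + Z.of_nat (2^k))%Z else 0%Z).
  assert (Hk1 : 1 <= 2^k) by (pose proof (Nat.pow_nonzero 2 k ltac:(lia)); lia).
  assert (Xp : x p = (lo p + Z.of_nat (2^k))%Z).
  { unfold x. destruct (dec (olt p p)) as [H|_]; [exfalso; exact (olt_irr _ H)|].
    destruct (dec (p = p)) as [_|n]; [auto|congruence]. }
  assert (Xa : forall d', olt p d' -> x d' = lo d').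
  { intros d' H; unfold x; destruct (dec (olt p d')); [auto|contradiction]. }
  assert (Hx : exists y : X, emb y = x).
  { apply existsX.
    - intros d'. unfold x. destruct (dec (olt p d')) as [H|H].
      + apply Glo1. intros ->. exact (olt_t0 _ H).
      + destruct (dec (d' = p)); [pose proof (Glo2 d'); lia|lia].
    - unfold x. destruct (dec (olt p None)) as [H|H]; [auto|].
      destruct (dec (None = p)) as [<-|H']; [|lia].
      destruct Hpd as [H1|[<- H1]]; [simpl in H1; contradiction|].
      pose proof (pow_log _ _ H1). lia.
    - destruct Glo4 as [l Hl]. exists (p :: l). intros d' H. unfold x in H.
      destruct (dec (olt p d')); [right; apply Hl; auto|].
      destruct (dec (d' = p)) as [->|]; [left; auto|lia]. }
  destruct Hx as [y Hy]. exists y. rewrite Hy.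
  assert (R1 : RV lo x (rv p (Z.of_nat (2^k)))).
  { exists p. split; [split|split].
    - rewrite Xp; lia.
    - intros d' H; rewrite Xa; auto.
    - rewrite Xp; lia.
    - rewrite Xp. f_equal; lia. }
  assert (R2 : exists r2, RV x hi r2 /\ ~ owlt r2 (rv p (Z.of_nat (2^k)))).
  { destruct Hpd as [Hpd|[<- Hk]].
    - exists (rv d (hi d - lo d)). split.
      + exists d. split; [split|split].
        * rewrite Xa; auto.
        * intros d' H; rewrite Xa by (eapply olt_trans; eauto). apply E; auto.
        * rewrite Xa; auto.
        * rewrite Xa; auto.
      + intro H. exact (owlt_irr _ (owlt_trans _ _ _ H Hu)).
    - pose proof (pow_log _ _ Hk) as Hbig.
      exists (rv p (hi p - x p)). split.
      + exists p. split; [split|split]; auto.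
        * rewrite Xp. lia.
        * intros d' H; rewrite Xa; auto.
        * rewrite Xp; lia.
      + apply rv_le_c. rewrite Nat2Z.id, Nat.log2_pow2 by lia.
        rewrite Xp. rewrite <- (Nat.log2_pow2 k) at 1 by lia.
        apply Nat.log2_le_mono. lia. }
  destruct R2 as [r2 [HR2 Hn2]].
  split; [exact (RV_elt _ _ _ R1)|split; [exact (RV_elt _ _ _ HR2)|split]].
  - intros r1 H. rewrite (RV_unique _ _ _ _ H R1). apply owlt_irr.
  - intros r2' H. rewrite (RV_unique _ _ _ _ H HR2). auto.
Qed.


Lemma LB_mono : forall F w v, LB F w -> owlt v w -> LB F v.
Proof. intros F w v H Hv lo hi r HC HR Hr. apply (H lo hi r HC HR). eapply owlt_trans; eauto. Qed.

Lemma inF_cons : forall F x e, inF F e -> inF (x :: F) e.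
Proof. intros F x e [H|[H|[y [Hy H]]]]; [left|right;left|right;right;exists y; split; [right|]]; auto. Qed.
Lemma inF_uncons : forall F x e, inF (x :: F) e -> e <> emb x -> inF F e.
Proof.
  intros F x e [H|[H|[y [[<-|Hy] H]]]] Hn; [left|right;left|contradiction|right;right;exists y]; auto.
Qed.

Lemma consec_left : forall F lo hi x, Consec F lo hi -> elt lo (emb x) -> elt (emb x) hi ->
  Consec (x :: F) lo (emb x).
Proof.
  intros F lo hi x [Hlo [Hhi [Hlh Hno]]] H1 H2.
  split; [apply inF_cons; auto|split; [right; right; exists x; split; [left|]; auto|split; [auto|]]].
  intros y [<-|Hy] [H3 H4]; [exact (elt_irr _ H4)|].
  apply (Hno y Hy); split; [auto|eapply elt_trans; eauto].
Qed.
Lemma consec_right : forall F lo hi x, Consec F lo hi -> elt lo (emb x) -> elt (emb x) hi ->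
  Consec (x :: F) (emb x) hi.
Proof.
  intros F lo hi x [Hlo [Hhi [Hlh Hno]]] H1 H2.
  split; [right; right; exists x; split; [left|]; auto|split; [apply inF_cons; auto|split; [auto|]]].
  intros y [<-|Hy] [H3 H4]; [exact (elt_irr _ H3)|].
  apply (Hno y Hy); split; [eapply elt_trans; eauto|auto].
Qed.

Lemma LB_ext : forall F lo hi x v, LB F v -> Consec F lo hi -> elt lo (emb x) -> elt (emb x) hi ->
  (forall r1, RV lo (emb x) r1 -> ~ owlt r1 v) ->
  (forall r2, RV (emb x) hi r2 -> ~ owlt r2 v) -> LB (x :: F) v.
Proof.
  intros F lo hi x v HLB [Hlo [Hhi [Hlh Hno]]] H1 H2 A B lo' hi' r [Hlo' [Hhi' [Hlh' Hno']]] HR.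
  destruct (classic (lo' = emb x)) as [E0|E0].
  - subst lo'. assert (hi' = hi) as ->.
    { destruct (elt_tri hi hi' (inF_fsupp _ _ Hhi) (inF_fsupp _ _ Hhi')) as [E|[E|E]];
        [auto|exfalso|exfalso].
      + destruct Hhi as [->|[->|[y [Hy ->]]]].
        * exact (elt_asym _ _ H2 (bot_lt_emb x)).
        * exact (inF_top _ _ Hhi' E).
        * apply (Hno' y (or_intror Hy)); auto.
      + destruct Hhi' as [->|[->|[y [[<-|Hy] ->]]]].
        * exact (elt_asym _ _ Hlh' (bot_lt_emb x)).
        * exact (inF_top _ _ Hhi E).
        * exact (elt_irr _ Hlh').
        * apply (Hno y Hy); split; [eapply elt_trans; eauto|auto]. }
    exact (B r HR).
  - destruct (classic (hi' = emb x)) as [E1|E1].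
    + subst hi'. assert (lo' = lo) as ->.
      { destruct (elt_tri lo lo' (inF_fsupp _ _ Hlo) (inF_fsupp _ _ Hlo')) as [E|[E|E]];
          [auto|exfalso|exfalso].
        + destruct Hlo' as [->|[->|[y [[<-|Hy] ->]]]].
          * exact (inF_bot _ _ Hlo E).
          * exact (elt_asym _ _ Hlh' (emb_lt_top x)).
          * apply E0; auto.
          * apply (Hno y Hy); split; [auto|eapply elt_trans; eauto].
        + destruct Hlo as [->|[->|[y [Hy ->]]]].
          * exact (inF_bot _ _ Hlo' E).
          * exact (inF_top _ _ Hhi Hlh).
          * apply (Hno' y (or_intror Hy)); auto. }
      exact (A r HR).
    + refine (HLB lo' hi' r _ HR).
      split; [eapply inF_uncons; eauto|split; [eapply inF_uncons; eauto|split; [auto|]]].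
      intros y Hy; apply Hno'; right; auto.
Qed.

Lemma cut_of_R : forall F R, prime_ext ltX F R -> exists lo hi, Consec F lo hi /\
  (lo = botE \/ exists y, lo = emb y) /\ (hi = topE \/ exists y, hi = emb y) /\
  forall x, elt lo (emb x) -> elt (emb x) hi -> realizes ltX F R x.
Proof.
  intros F R [[Rirr [Rtr Rtri]] Rres].
  set (P := fun a => exists H : In a F, R (Some (exist _ a H)) None).
  set (Q := fun a => exists H : In a F, R None (Some (exist _ a H))).
  assert (PQ : forall a (H : In a F), R (Some (exist _ a H)) None \/ R None (Some (exist _ a H))).
  { intros a H. destruct (Rtri (Some (exist _ a H)) None) as [E|[?|?]]; [discriminate|auto|auto]. }
  assert (Pall : forall a, P a -> forall H, R (Some (exist _ a H)) None).
  { intros a [H0 HP] H. rewrite (proof_irrelevance _ H H0); auto. }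
  assert (Qall : forall a, Q a -> forall H, R None (Some (exist _ a H))).
  { intros a [H0 HP] H. rewrite (proof_irrelevance _ H H0); auto. }
  assert (PQlt : forall a b, P a -> Q b -> ltX a b).
  { intros a b [Ha HP] [Hb HQ]. apply (proj1 (Rres (exist _ a Ha) (exist _ b Hb))). eapply Rtr; eauto. }
  assert (Hlo : exists lo, inF F lo /\ (lo = botE \/ exists y, lo = emb y) /\
     (lo = botE \/ exists a, P a /\ lo = emb a) /\ forall a, P a -> ~ elt lo (emb a)).
  { destruct (list_max ltX ltX_tri ltX_trans P F) as [H|[x [Hx [Px Hmax]]]].
    - exists botE. split; [left; auto|split; [left; auto|split; [left; auto|]]].
      intros a [Ha HP]. exfalso; apply (H a Ha); exists Ha; auto.
    - exists (emb x). split; [right; right; exists x; auto|split; [right; exists x; auto|split; [right; exists x; auto|]]].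
      intros a Pa. pose proof Pa as [Ha _].
      destruct (Hmax a Ha Pa) as [->|H]; intro H'; [exact (elt_irr _ H')|].
      apply emb_lt in H; exact (elt_asym _ _ H H'). }
  assert (Hhi : exists hi, inF F hi /\ (hi = topE \/ exists y, hi = emb y) /\
     (hi = topE \/ exists a, Q a /\ hi = emb a) /\ forall a, Q a -> ~ elt (emb a) hi).
  { destruct (list_max (fun a b => ltX b a)
       ltac:(intros a b; destruct (ltX_tri a b) as [?|[?|?]]; auto)
       ltac:(intros a b c H1 H2; simpl in *; exact (ltX_trans _ _ _ H2 H1)) Q F) as [H|[x [Hx [Px Hmax]]]].
    - exists topE. split; [right; left; auto|split; [left; auto|split; [left; auto|]]].
      intros a [Ha HP]. exfalso; apply (H a Ha); exists Ha; auto.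
    - exists (emb x). split; [right; right; exists x; auto|split; [right; exists x; auto|split; [right; exists x; auto|]]].
      intros a Pa. pose proof Pa as [Ha _].
      destruct (Hmax a Ha Pa) as [->|H]; intro H'; [exact (elt_irr _ H')|].
      apply emb_lt in H; exact (elt_asym _ _ H H'). }
  destruct Hlo as [lo [Hlo1 [Hlo2 [Hlo3 Hlo4]]]].
  destruct Hhi as [hi [Hhi1 [Hhi2 [Hhi3 Hhi4]]]].
  exists lo, hi.
  assert (Hlh : elt lo hi).
  { destruct Hlo3 as [->|[a [Pa ->]]]; destruct Hhi3 as [->|[b [Qb ->]]];
      [exact bot_lt_top|apply bot_lt_emb|apply emb_lt_top|apply emb_lt; auto]. }
  split; [split; [auto|split; [auto|split; [auto|]]]|split; [auto|split; [auto|]]].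
  - intros y Hy [H1 H2]. destruct (PQ y Hy) as [HP|HQ];
      [apply (Hlo4 y); [exists Hy; auto|auto]|apply (Hhi4 y); [exists Hy; auto|auto]].
  - intros x H1 H2. split.
    + intro Hx. destruct (PQ x Hx) as [HP|HQ];
        [apply (Hlo4 x (ex_intro _ Hx HP)); auto|apply (Hhi4 x (ex_intro _ Hx HQ)); auto].
    + intros [a Ha]. simpl proj1_sig. split; split.
      * intro HQ. apply emb_lt.
        destruct (elt_tri hi (emb a) (inF_fsupp _ _ Hhi1) (emb_fsupp a)) as [E|[E|E]];
          [rewrite <- E; auto|eapply elt_trans; eauto|exfalso; apply (Hhi4 a (ex_intro _ Ha HQ)); auto].
      * intro Hxa. destruct (PQ a Ha) as [HP|HQ]; auto. exfalso.
        apply (Hlo4 a (ex_intro _ Ha HP)). apply emb_lt in Hxa. eapply elt_trans; eauto.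
      * intro HP. apply emb_lt.
        destruct (elt_tri (emb a) lo (emb_fsupp a) (inF_fsupp _ _ Hlo1)) as [E|[E|E]];
          [rewrite E; auto|eapply elt_trans; eauto|exfalso; apply (Hlo4 a (ex_intro _ Ha HP)); auto].
      * intro Hax. destruct (PQ a Ha) as [HP|HQ]; auto. exfalso.
        apply (Hhi4 a (ex_intro _ Ha HQ)). apply emb_lt in Hax. eapply elt_trans; eauto.
Qed.

Definition Rof (F : list X) (lo hi : Ext) (a b : option (pts F)) : Prop :=
  match a, b with
  | Some a, Some b => ltX (proj1_sig a) (proj1_sig b)
  | Some a, None => elt (emb (proj1_sig a)) hi
  | None, Some b => elt lo (emb (proj1_sig b))
  | None, None => False
  end.

Lemma Rof_prime : forall F lo hi, Consec F lo hi -> prime_ext ltX F (Rof F lo hi).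
Proof.
  intros F lo hi [Hlo [Hhi [Hlh Hno]]].
  assert (K1 : forall a, In a F -> elt (emb a) hi -> emb a = lo \/ elt (emb a) lo).
  { intros a Ha H. destruct (elt_tri (emb a) lo (emb_fsupp a) (inF_fsupp _ _ Hlo)) as [E|[E|E]]; auto.
    exfalso; apply (Hno a Ha); auto. }
  assert (K2 : forall a, In a F -> elt lo (emb a) -> emb a = hi \/ elt hi (emb a)).
  { intros a Ha H. destruct (elt_tri (emb a) hi (emb_fsupp a) (inF_fsupp _ _ Hhi)) as [E|[E|E]]; auto.
    exfalso; apply (Hno a Ha); auto. }
  split; [split; [|split]|].
  - intros [[a Ha]|]; simpl; [apply ltX_irr|auto].
  - intros [[a Ha]|] [[b Hb]|] [[c Hc]|]; simpl; intros H1 H2; try contradiction.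
    + eapply ltX_trans; eauto.
    + apply emb_lt in H1; eapply elt_trans; eauto.
    + apply emb_lt.
      destruct (K1 a Ha H1) as [E|E]; destruct (K2 c Hc H2) as [E'|E'];
        try rewrite E; try rewrite E'; eauto using elt_trans.
    + apply emb_lt in H2; eapply elt_trans; eauto.
    + apply (Hno b Hb); auto.
  - intros [[a Ha]|] [[b Hb]|]; simpl.
    + destruct (ltX_tri a b) as [<-|[H|H]]; [left; rewrite (proof_irrelevance _ Ha Hb); auto|auto|auto].
    + right. destruct (elt_tri (emb a) hi (emb_fsupp a) (inF_fsupp _ _ Hhi)) as [E|[E|E]].
      * right; rewrite E; auto.
      * left; auto.
      * right; eapply elt_trans; eauto.
    + right. destruct (elt_tri (emb b) hi (emb_fsupp b) (inF_fsupp _ _ Hhi)) as [E|[E|E]].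
      * left; rewrite E; auto.
      * right; auto.
      * left; eapply elt_trans; eauto.
    + left; auto.
  - intros a b; simpl; tauto.
Qed.

Lemma real_between : forall F lo hi x, Consec F lo hi -> realizes ltX F (Rof F lo hi) x ->
  elt lo (emb x) /\ elt (emb x) hi.
Proof.
  intros F lo hi x [Hlo [Hhi [Hlh Hno]]] [Hnin Hr]. split.
  - destruct Hlo as [->|[->|[a [Ha ->]]]];
      [apply bot_lt_emb|exfalso; exact (inF_top _ _ Hhi Hlh)|].
    apply emb_lt. apply (proj1 (proj2 (Hr (exist _ a Ha)))). exact Hlh.
  - destruct Hhi as [->|[->|[a [Ha ->]]]];
      [exfalso; exact (inF_bot _ _ Hlo Hlh)|apply emb_lt_top|].
    apply emb_lt. apply (proj1 (proj1 (Hr (exist _ a Ha)))). exact Hlh.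
Qed.

Lemma lower : forall w F, LB F w -> rkge ltX owlt F w.
Proof.
  intros w. induction w as [w IH] using (well_founded_induction owlt_wf). intros F HLB.
  constructor.
  - intros v [Hvw _] R HR.
    destruct (cut_of_R F R HR) as [lo [hi [HC [Hlo [Hhi Hreal]]]]].
    destruct (elt_RV lo hi (proj1 (proj2 (proj2 HC)))) as [r Hr].
    assert (Hvr : owlt v r).
    { destruct (owlt_tri r w) as [E|[E|E]];
        [subst; auto|exfalso; exact (HLB lo hi r HC Hr E)|eapply owlt_trans; eauto]. }
    destruct (Lsplit lo hi r v Hlo Hhi Hr Hvr) as [x [H1 [H2 [A B]]]].
    exists x. split; [apply Hreal; auto|].
    apply IH; auto. eapply LB_ext; eauto. apply LB_mono with w; auto.
  - intros _ v Hvw. apply IH; auto. apply LB_mono with w; auto.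
Qed.

Lemma upper : forall w F, rkge ltX owlt F w -> LB F w.
Proof.
  intros w. induction w as [w IH] using (well_founded_induction owlt_wf).
  intros F Hrk lo hi r HC Hr Hrw. inversion Hrk as [F' w' H1 H2]; subst.
  destruct (classic (exists u, succ_of owlt u w)) as [[u [Huw Hnb]]|Hns].
  - pose proof (Rof_prime F lo hi HC) as HR.
    destruct (H1 u (conj Huw Hnb) _ HR) as [x [Hreal Hrk']].
    destruct (real_between F lo hi x HC Hreal) as [Hx1 Hx2].
    pose proof (IH u Huw (x :: F) Hrk') as HLB.
    destruct (elt_RV _ _ Hx1) as [r1 Hr1]. destruct (elt_RV _ _ Hx2) as [r2 Hr2].
    assert (Hru : ~ owlt u r) by (intro H; apply (Hnb r); auto).
    assert (Hle : forall r', owlt r' r -> owlt r' u).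
    { intros r' H. destruct (owlt_tri r u) as [E|[E|E]];
        [subst; auto|eapply owlt_trans; eauto|contradiction]. }
    destruct (Ulem lo (emb x) hi r r1 r2 Hr Hr1 Hr2) as [L|L].
    + apply (HLB lo (emb x) r1 (consec_left F lo hi x HC Hx1 Hx2) Hr1). auto.
    + apply (HLB (emb x) hi r2 (consec_right F lo hi x HC Hx1 Hx2) Hr2). auto.
  - assert (Hlim : is_limit owlt w) by (split; [exists r; auto|auto]).
    destruct (owlt_tri (next r) w) as [E|[E|E]].
    + apply Hns; exists r; rewrite <- E; apply succ_next.
    + exact (IH (next r) E F (H2 Hlim _ E) lo hi r HC Hr (proj1 (succ_next r))).
    + destruct (succ_next r) as [_ Hn]. apply (Hn w); auto.
Qed.

Lemma main_sec : rank_eq ltX owlt (inr (Nat.log2 m)).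
Proof.
  assert (Cbt : Consec [] botE topE).
  { split; [left; auto|split; [right; left; auto|split; [exact bot_lt_top|]]]. intros y []. }
  assert (RVbt : RV botE topE (inr (Nat.log2 m))).
  { exists None. split; [split|split]; simpl; [lia|intros d []|lia|].
    do 2 f_equal. lia. }
  split.
  - apply lower. intros lo hi r [Hlo [Hhi [Hlh _]]] Hr.
    destruct Hlo as [->|[->|[y [[] _]]]]; [|exfalso; exact (inF_top _ _ Hhi Hlh)].
    destruct Hhi as [->|[->|[y [[] _]]]]; [exfalso; exact (elt_irr _ Hlh)|].
    rewrite (RV_unique _ _ _ _ Hr RVbt). apply owlt_irr.
  - intros v Hv Hrk. exact (upper v [] Hrk botE topE _ Cbt RVbt Hv).
Qed.

End Main.

Lemma least_exists (T : Type) (ltT : T -> T -> Prop) :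
  strict_total_order ltT -> well_founded ltT -> inhabited T ->
  exists t0, forall t, t <> t0 -> ltT t0 t.
Proof.
  intros Hord Hwf [t].
  induction t as [t IH] using (well_founded_induction Hwf).
  destruct (classic (exists t', ltT t' t)) as [[t' H]|H]; [apply (IH t'); auto|].
  exists t. intros t'' Hn. destruct Hord as [_ [_ Htri]].
  destruct (Htri t t'') as [E|[E|E]]; [congruence|auto|exfalso; apply H; eauto].
Qed.

Theorem theorem6p12 (T : Type) (ltT : T -> T -> Prop)
  (Hord : strict_total_order ltT) (Hwf : well_founded ltT)
  (Hcount : countable_type T) (Hbeta : inhabited T)
  (m : nat) (Hm : 1 <= m) :
  rank_eq (opm_lt ltT m) (ow_lt ltT) (inr (Nat.log2 m)).
Proof.
  destruct (least_exists T ltT Hord Hwf Hbeta) as [t0 Ht0].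
  eapply main_sec; eauto.
Qed.
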